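(* Let $p\in[0,1]$ and let $\{G_n\}$ be a sequence of graphs with a converging giant (with respect to $\mu$ and $p$), $G_n$ having $n$ vertices, and let $v$ be a uniformly random vertex. If $\zeta(p)>0$ then $\lim_{k\to\infty}\limsup_{n\to\infty}\mathbb P(v\notin C_1,\ |C(v)|\ge k)=0$; if $\zeta(p)=0$ then $\lim_{k\to\infty}\limsup_{n\to\infty}\mathbb P(|C(v)|\ge k)=0$. Moreover, for two independent uniformly random vertices $u,v$, $\lim_{k\to\infty}\limsup_{n\to\infty}\mathbb P\big(|C(u)|\ge k,\ |C(v)|\ge k,\ C(u)\ne C(v)\big)=0$. Probabilities are over the graph, percolation and the choice of vertices.
   Context: $\mathcal G_*$: rooted connected locally finite graphs up to root-preserving isomorphism; $\{G_n\}$ converges in probability in the local weak sense to $\mu$ on $\mathcal G_*$ if $\frac1{|V(G_n)|}\sum_vf(G_n,v)\to\int f\,d\mu$ in probability for every bounded $f$ depending only on a bounded-radius ball around the root. $G(p)$ is bond percolation with retention probability $p$, $C(v)$ is the component of $v$ in $G_n(p)$, $C_1$ the largest component of $G_n(p)$, and $\zeta(p)=\int\mathbb P_{G(p)}(|C(o)|=\infty)\,d\mu$. A sequence $\{G_n\}$ of (possibly random) graphs converging in probability in the local weak sense to $\mu$ has a converging giant if $|C_1|/n\to\zeta(p)$ in probability. *)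

(* Defs.v *)
From HB Require Import structures.
From mathcomp Require Import all_boot all_order all_algebra.
From mathcomp Require Import all_classical all_reals all_analysis.
Set Implicit Arguments. Unset Strict Implicit. Unset Printing Implicit Defensive.
Import Order.TTheory GRing.Theory Num.Theory.
Import numFieldNormedType.Exports.
Local Open Scope classical_set_scope.
Local Open Scope ring_scope.

Definition fin_graph (n : nat) := {set 'I_n * 'I_n}.

Definition simple_graph n (G : fin_graph n) : bool :=
  [forall x, forall y, ((x, y) \in G) == ((y, x) \in G)] &&
  [forall x, (x, x) \notin G].

(* Bond percolation with retention probability p on a simple graph G:  *)
(* a configuration is the set w of retained edges, each undirected      *)
(* edge being represented by its pair (x,y) with x < y. The weight is   *)
Definition perc_weight (R : numDomainType) (p : R) n (G w : fin_graph n) : R :=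
  if w \subset [set e in G | (e.1 < e.2)%N]%SET then
    \prod_(e in G | (e.1 < e.2)%N) (if e \in w then p else 1 - p)
  else 0.

Definition open_rel n (w : fin_graph n) : rel 'I_n :=
  fun x y => ((x, y) \in w) || ((y, x) \in w).

Definition perc_cluster n (w : fin_graph n) (v : 'I_n) : {set 'I_n} :=
  [set y | connect (open_rel w) v y]%SET.

Definition max_cluster_size n (w : fin_graph n) : nat :=
  \max_(v : 'I_n) #|perc_cluster w v|.

(* membership in C_1, the largest component (ties broken by choosing   *)
(* a canonical vertex with [pick]).                                     *)
Definition in_giant n (w : fin_graph n) (v : 'I_n) : bool :=
  if [pick u | #|perc_cluster w u| == max_cluster_size w] is Some u
  then v \in perc_cluster w u else false.

Definition giant_size n (w : fin_graph n) : nat := #|[set v | in_giant w v]%SET|.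

(* Probabilities on the finite side: a (possibly random) graph G_n on  *)
(* n vertices with law P n, then percolation, then uniform vertices.   *)
Definition ProbGraph (R : numFieldType) (P : forall n, fin_graph n -> R) n
  (E : fin_graph n -> bool) : R :=
  \sum_(G : fin_graph n) P n G * (E G)%:R.

Definition Eperc (R : numFieldType) (P : forall n, fin_graph n -> R) (p : R) n
  (F : fin_graph n -> fin_graph n -> R) : R :=
  \sum_(G : fin_graph n) \sum_(w : fin_graph n) P n G * perc_weight p G w * F G w.

Definition ProbPerc (R : numFieldType) (P : forall n, fin_graph n -> R) (p : R) n
  (E : fin_graph n -> fin_graph n -> bool) : R :=
  Eperc P p (fun G w => (E G w)%:R).

Definition Prob1 (R : numFieldType) (P : forall n, fin_graph n -> R) (p : R) n
  (E : fin_graph n -> fin_graph n -> 'I_n -> bool) : R :=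
  Eperc P p (fun G w => (\sum_(v : 'I_n) (E G w v)%:R) / n%:R).

Definition Prob2 (R : numFieldType) (P : forall n, fin_graph n -> R) (p : R) n
  (E : fin_graph n -> fin_graph n -> 'I_n -> 'I_n -> bool) : R :=
  Eperc P p (fun G w =>
    (\sum_(u : 'I_n) \sum_(v : 'I_n) (E G w u v)%:R) / (n%:R ^+ 2)).

(* Rooted graphs: a graph on nat rooted at 0; the rooted graph proper  *)
(* is the component of 0.                                               *)
Definition rooted_graph := nat -> nat -> bool.

Definition valid_rgraph (a : rooted_graph) : Prop :=
  (forall x y, a x y = a y x) /\ (forall x, ~~ a x x) /\
  (forall x, exists N, forall y, a x y -> (y < N)%N).

Fixpoint within (a : rooted_graph) (r x : nat) : Prop :=
  match r with
  | 0 => x = 0%N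
  | r'.+1 => within a r' x \/ exists y, within a r' y /\ a y x
  end.

Definition ball_iso (r : nat) (a b : rooted_graph) : Prop :=
  exists phi : nat -> nat,
    [/\ phi 0%N = 0%N,
        forall x, within a r x -> within b r (phi x),
        forall x y, within a r x -> within a r y -> phi x = phi y -> x = y,
        forall y, within b r y -> exists2 x, within a r x & phi x = y
      & forall x y, within a r x -> within a r y -> a x y = b (phi x) (phi y)].

Definition local_fun (R : Type) (f : rooted_graph -> R) : Prop :=
  exists r, forall a b, ball_iso r a b -> f a = f b.

Definition bounded_rfun (R : numDomainType) (f : rooted_graph -> R) : Prop :=
  exists M : R, forall a, `|f a| <= M.

(* the finite graph G rooted at v, relabelled so that v becomes 0 *)
Definition decode n (v : 'I_n) (i : nat) : option 'I_n :=
  if i == 0%N then Some v else insub (if (i <= v)%N then i.-1 else i).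

Definition rooted_at n (G : fin_graph n) (v : 'I_n) : rooted_graph :=
  fun i j => match decode v i, decode v j with
             | Some x, Some y => (x, y) \in G
             | _, _ => false
             end.

(* Local weak convergence in probability of G_n (law P n) to mu, where *)
(* mu is the law of the random rooted graph X on (Omega, Pmu).          *)
Definition lwc_in_prob (R : realType) (P : forall n, fin_graph n -> R)
  (d : measure_display) (Omega : measurableType d) (Pmu : probability Omega R)
  (X : Omega -> rooted_graph) : Prop :=
  forall f : rooted_graph -> R, local_fun f -> bounded_rfun f ->
  forall eps : R, 0 < eps ->
  (fun n => ProbGraph P (fun G : fin_graph n =>
      `| (\sum_(v : 'I_n) f (rooted_at G v)) / n%:R
         - Rintegral Pmu setT (f \o X) | > eps)) @ \oo --> 0.

(* zeta(p) = \int P_{G(p)}(|C(o)| = oo) dmu.                            *)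
(* P_{G(p)}(|C(o)| >= k) is obtained as the increasing limit of the     *)
(* corresponding probability for the graph restricted to {0,...,N}, and *)
(* P(|C(o)| = oo) as the decreasing limit in k (continuity of the       *)
(* product measure).                                                    *)
Definition restr (a : rooted_graph) (N : nat) : fin_graph N.+1 :=
  [set e : 'I_N.+1 * 'I_N.+1 | a e.1 e.2]%SET.

Definition perc_ge (R : numDomainType) (p : R) (a : rooted_graph) (k N : nat) : R :=
  \sum_(w : fin_graph N.+1)
    perc_weight p (restr a N) w * (k <= #|perc_cluster w ord0|)%N%:R.

Definition perc_inf (R : realType) (p : R) (a : rooted_graph) : R :=
  limn (fun k => limn (fun N => (perc_ge p a k N : R))).

Definition zeta (R : realType) (p : R) (d : measure_display)
  (Omega : measurableType d) (Pmu : probability Omega R)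
  (X : Omega -> rooted_graph) : R :=
  Rintegral Pmu setT (fun o => perc_inf p (X o)).

Definition converging_giant (R : realType) (P : forall n, fin_graph n -> R) (p : R)
  (d : measure_display) (Omega : measurableType d) (Pmu : probability Omega R)
  (X : Omega -> rooted_graph) : Prop :=
  forall eps : R, 0 < eps ->
  (fun n => ProbPerc P p (fun (G w : fin_graph n) =>
      `| (giant_size w)%:R / n%:R - zeta p Pmu X | > eps)) @ \oo --> 0.

(* Main.v *)
Require Import Defs.
From HB Require Import structures.
From mathcomp Require Import all_boot all_order all_algebra.
From mathcomp Require Import all_classical all_reals all_analysis.
Import Order.TTheory GRing.Theory Num.Theory.
Import numFieldNormedType.Exports.
Set Implicit Arguments. Unset Strict Implicit. Unset Printing Implicit Defensive.
Local Open Scope classical_set_scope.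
Local Open Scope ring_scope.
From mathcomp Require Import zify lra ring measurable_realfun.

Set Implicit Arguments.
Local Open Scope classical_set_scope.
Local Close Scope classical_set_scope.
Section Sums.
Variable R : realType.

Lemma sum_subsets (T : finType) (A : {set T}) (c : T -> bool -> R) :
  \sum_(w : {set T} | w \subset A) \prod_(e in A) c e (e \in w) =
  \prod_(e in A) (c e true + c e false).
Proof.
pose F e b := if e \in A then c e b else (if b then 0 else 1 : R).
have := @bigA_distr_bigA R 0 1 *%R +%R T bool F.
rewrite (eq_bigr (fun e => if e \in A then c e true + c e false else 1)); last first.
  by move=> e _; rewrite big_bool /F; case: (e \in A) => //=; rewrite add0r.
rewrite -big_mkcond /= => ->.
rewrite (reindex (fun w : {set T} => [ffun e => e \in w])) /=; last first.
  apply: onW_bij; exists (fun f : {ffun T -> bool} => [set e | f e]).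
    by move=> w; apply/setP => e; rewrite inE ffunE.
  by move=> f; apply/ffunP => e; rewrite ffunE inE.
rewrite [LHS]big_mkcond /=; apply: eq_bigr => w _; symmetry.
rewrite (bigID (mem A)) /=.
under eq_bigr => e eA do rewrite ffunE /F eA.
under [X in _ * X]eq_bigr => e eA do rewrite ffunE /F (negbTE eA).
case: ifP => wA.
  rewrite [X in _ * X]big1 ?mulr1 // => e eA.
  by case: ifP => // ew; move/fintype.subsetP: wA => /(_ e ew); rewrite (negbTE eA).
have /subsetPn [e ew eA] := negbT wA.
by rewrite [X in _ * X](bigD1 e) //= ew mul0r mulr0.
Qed.

Lemma sum_split (T : finType) (A1 A : {set T}) (Y : {set T} -> R) :
  A1 \subset A ->
  \sum_(w : {set T} | w \subset A) Y w =
  \sum_(w1 : {set T} | w1 \subset A1) \sum_(w2 : {set T} | w2 \subset A :\: A1) Y (w1 :|: w2).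
Proof.
move=> /fintype.subsetP sA.
rewrite pair_big_dep /=.
rewrite [RHS](reindex_onto (fun w : {set T} => (w :&: A1, w :&: (A :\: A1)))
   (fun q => q.1 :|: q.2)) /=; last first.
  move=> [q1 q2] /= /andP[/fintype.subsetP s1 /fintype.subsetP s2].
  congr pair; apply/setP => e; rewrite !inE.
    case e1: (e \in q1); first by rewrite /= s1.
    by case e2: (e \in q2) => //=; move: (s2 e e2); rewrite !inE => /andP[/negbTE ->].
  case e2: (e \in q2); first by rewrite orbT /=; move: (s2 e e2); rewrite inE.
  by case e1: (e \in q1) => //=; rewrite s1 //= andbF.
have UA : A1 :|: A :\: A1 = A.
  by apply/setP => e; rewrite !inE; case: (boolP (e \in A1)) => //= /sA ->.
apply: eq_big => w.
  by rewrite !finset.subsetIr /= -finset.setIUr UA; apply/idP/eqP => /finset.setIidPl.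
by move=> wA; rewrite -finset.setIUr UA; move/finset.setIidPl: wA => ->.
Qed.

Lemma marg (T : finType) (A1 A : {set T}) (c : T -> bool -> R) (F : {set T} -> R) :
  A1 \subset A -> (forall e, e \in A :\: A1 -> c e true + c e false = 1) ->
  \sum_(w : {set T} | w \subset A) (\prod_(e in A) c e (e \in w)) * F (w :&: A1) =
  \sum_(w : {set T} | w \subset A1) (\prod_(e in A1) c e (e \in w)) * F w.
Proof.
move=> sA1 c1; rewrite (sum_split _ sA1); apply: eq_bigr => w1 /fintype.subsetP s1.
have P2 (w2 : {set T}) : w2 \subset A :\: A1 ->
   (\prod_(e in A) c e (e \in w1 :|: w2)) * F ((w1 :|: w2) :&: A1) =
   ((\prod_(e in A1) c e (e \in w1)) * F w1) * \prod_(e in A :\: A1) c e (e \in w2).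
  move=> /fintype.subsetP s2.
  have -> : (w1 :|: w2) :&: A1 = w1.
    apply/setP => e; rewrite !inE; case e1: (e \in w1); first by rewrite /= s1.
    by case e2: (e \in w2) => //=; move: (s2 e e2); rewrite !inE => /andP[/negbTE ->].
  rewrite (big_setID A1) /= (finset.setIidPr sA1) mulrAC; congr (_ * _ * _).
    apply: eq_bigr => e eA1; rewrite inE; case e2: (e \in w2); last by rewrite orbF.
    by move: (s2 e e2); rewrite !inE eA1.
  apply: eq_bigr => e; rewrite !inE => /andP[eA1 _].
  by case e1: (e \in w1) => //=; move: (s1 e e1); rewrite (negbTE eA1).
rewrite (eq_bigr _ P2) -big_distrr /= sum_subsets (eq_bigr (fun=> 1) c1) big1_eq mulr1 //.
Qed.

End Sums.

Set Implicit Arguments.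
Local Open Scope classical_set_scope.
Local Close Scope classical_set_scope.

Section Perc.
Variable R : realType.
Variable p : R.
Hypothesis hp : 0 <= p <= 1.

Definition Glt n (G : fin_graph n) : {set 'I_n * 'I_n} := [set e in G | (e.1 < e.2)%N].
Definition cw (b : bool) : R := if b then p else 1 - p.

Lemma cw_ge0 b : 0 <= cw b.
Proof. by case/andP: hp => h0 h1; case: b => //=; rewrite subr_ge0. Qed.

Lemma perc_weightE n (G w : fin_graph n) : perc_weight p G w =
  if w \subset Glt G then \prod_(e in Glt G) cw (e \in w) else 0.
Proof.
rewrite /perc_weight /Glt; case: ifP => // _.
by apply: eq_bigl => e; rewrite inE.
Qed.

Lemma Esum n (G : fin_graph n) (F : fin_graph n -> R) :
  \sum_w perc_weight p G w * F w =
  \sum_(w : fin_graph n | w \subset Glt G) (\prod_(e in Glt G) cw (e \in w)) * F w.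
Proof.
rewrite [RHS]big_mkcond; apply: eq_bigr => w _; rewrite perc_weightE.
by case: ifP => _; rewrite ?mul0r.
Qed.

Lemma weight_ge0 n (G w : fin_graph n) : 0 <= perc_weight p G w.
Proof.
rewrite perc_weightE; case: ifP => // _; apply: prodr_ge0 => e _; exact: cw_ge0.
Qed.

Lemma weight_sum1 n (G : fin_graph n) : \sum_w perc_weight p G w = 1.
Proof.
under eq_bigr do rewrite -[perc_weight _ _ _]mulr1.
rewrite Esum; under eq_bigr do rewrite mulr1.
rewrite (sum_subsets _ (fun _ b => cw b)) big1 // => e _; by rewrite /cw addrC subrK.
Qed.

Lemma marg_perc n (G1 G2 : fin_graph n) (F : fin_graph n -> R) :
  G1 \subset G2 ->
  \sum_w perc_weight p G2 w * F (w :&: G1) = \sum_w perc_weight p G1 w * F w.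
Proof.
move=> /fintype.subsetP s12; rewrite !Esum.
have sG : Glt G1 \subset Glt G2.
  by apply/fintype.subsetP => e; rewrite !inE => /andP[/s12 -> ->].
rewrite -(marg (c:=fun _ b => cw b) F sG); last by move=> e _; rewrite /cw addrC subrK.
apply: eq_bigr => w /fintype.subsetP wG; congr (_ * F _).
apply/setP => e; rewrite !inE; case ew: (e \in w) => //=.
by move: (wG e ew); rewrite !inE => /andP[_ ->]; rewrite andbT.
Qed.

Definition Pk n (G : fin_graph n) (x : 'I_n) (k : nat) : R :=
  \sum_w perc_weight p G w * (k <= #|perc_cluster w x|)%N%:R.

Lemma open_relC n (w : fin_graph n) a b : open_rel w a b = open_rel w b a.
Proof. by rewrite /open_rel orbC. Qed.

Lemma cluster_mono n (w1 w2 : fin_graph n) x :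
  w1 \subset w2 -> perc_cluster w1 x \subset perc_cluster w2 x.
Proof.
move=> /fintype.subsetP s; apply/fintype.subsetP => y; rewrite !inE.
apply: connect_sub => a b; rewrite /open_rel => /orP[/s|/s] h; apply: connect1;
  by rewrite /open_rel h ?orbT.
Qed.

Lemma x_in_cluster n (w : fin_graph n) x : x \in perc_cluster w x.
Proof. by rewrite inE connect0. Qed.

Lemma Pk_mono n (G1 G2 : fin_graph n) x k :
  G1 \subset G2 -> Pk G1 x k <= Pk G2 x k.
Proof.
move=> s; rewrite /Pk -(marg_perc _ s); apply: ler_sum => w _.
apply: ler_wpM2l; first exact: weight_ge0.
rewrite ler_nat; case h: (k <= _)%N => //=; rewrite lt0b (leq_trans h) //.
apply: subset_leq_card; apply: cluster_mono.
exact: finset.subsetIl.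
Qed.

Lemma Pk_ge0 n (G : fin_graph n) x k : 0 <= Pk G x k.
Proof. by apply: sumr_ge0 => w _; apply: mulr_ge0; [exact: weight_ge0|]. Qed.

Lemma Pk_le1 n (G : fin_graph n) x k : Pk G x k <= 1.
Proof.
rewrite -(weight_sum1 G); apply: ler_sum => w _.
by rewrite -[X in _ <= X]mulr1; apply: ler_wpM2l; [exact: weight_ge0|rewrite lern1 leq_b1].
Qed.

End Perc.

Set Implicit Arguments.
Local Open Scope classical_set_scope.
Local Close Scope classical_set_scope.

Section Ball.
Variable R : realType.
Variable p : R.
Hypothesis hp : 0 <= p <= 1.

Definition rset n (w : fin_graph n) (S : {set 'I_n}) : fin_graph n :=
  [set e in w | (e.1 \in S) && (e.2 \in S)].

Fixpoint fball n (H : fin_graph n) (x : 'I_n) (j : nat) : {set 'I_n} :=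
  if j is j'.+1 then fball H x j' :|:
     [set y | [exists z in fball H x j', ((z, y) \in H) || ((y, z) \in H)]]
  else [set x].

Lemma fball_x n (H : fin_graph n) x j : x \in fball H x j.
Proof. by elim: j => [|j IH] /=; rewrite ?inE ?IH. Qed.

Lemma in_rset n (w : fin_graph n) (S : {set 'I_n}) e :
  (e \in rset w S) = [&& e \in w, e.1 \in S & e.2 \in S].
Proof. by rewrite inE. Qed.

Lemma rset_sub n (w : fin_graph n) S : rset w S \subset w.
Proof. by apply/fintype.subsetP => e; rewrite inE => /andP[]. Qed.

Lemma rset_mono n (w : fin_graph n) (S S' : {set 'I_n}) : S \subset S' -> rset w S \subset rset w S'.
Proof.
move=> /fintype.subsetP s; apply/fintype.subsetP => e; rewrite !inE.
by case/and3P => -> /s -> /s ->.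
Qed.

Lemma cluster_in n (w : fin_graph n) (S : {set 'I_n}) x : x \in S -> perc_cluster (rset w S) x \subset S.
Proof.
move=> xS; apply/fintype.subsetP => y; rewrite inE => c.
have cl : closed_mem (open_rel (rset w S)) (mem S).
  move=> a b; rewrite /open_rel !inE /=.
  by case/orP => /and3P[_ -> ->].
by rewrite -(closed_connect cl c).
Qed.

Lemma ball_card n (H w : fin_graph n) x j : w \subset H ->
  (minn #|perc_cluster w x| j.+1 <= #|perc_cluster (rset w (fball H x j)) x|)%N.
Proof.
move=> /fintype.subsetP wH; elim: j => [|j IH].
  rewrite (leq_trans (geq_minr _ _)) // card_gt0; apply/set0Pn; exists x.
  exact: x_in_cluster.
set S := fball H x j; set S' := fball H x j.+1.
set C := perc_cluster w x; set Cj := perc_cluster (rset w S) x.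
set Cj' := perc_cluster (rset w S') x.
have sSS' : S \subset S' by apply: finset.subsetUl.
have sub1 : Cj \subset Cj' by apply: cluster_mono; apply: rset_mono.
have sub2 : Cj \subset C by apply: cluster_mono; apply: rset_sub.
have [hC|hC] := leqP #|C| #|Cj|.
  by rewrite (leq_trans (geq_minl _ _)) // (leq_trans hC) // subset_leq_card.
have hj : (j.+1 <= #|Cj|)%N by move: IH; rewrite -/S -/C -/Cj; lia.
have [z [z' /andP[/andP[ezz' zin] z'out]]] :
    exists z z', open_rel w z z' && (z \in Cj) && (z' \notin Cj).
  case: (pselect (exists z z', open_rel w z z' && (z \in Cj) && (z' \notin Cj))) => // nex.
  have cl : closed_mem (open_rel w) (mem Cj).
    move=> a b eab.
    case ha: (a \in Cj); case hb: (b \in Cj) => //; exfalso; apply: nex.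
      by exists a, b; rewrite eab ha hb.
    by exists b, a; rewrite open_relC eab ha hb.
  have : C \subset Cj.
    apply/fintype.subsetP => y; rewrite inE => cy.
    by rewrite -(closed_connect cl cy) x_in_cluster.
  by move=> /subset_leq_card; rewrite leqNgt hC.
have zS : z \in S by move/fintype.subsetP: (cluster_in w (fball_x H x j)); apply.
have z'S' : z' \in S'.
  rewrite /S' /= !inE; apply/orP; right; apply/exists_inP; exists z => //.
  by move: ezz'; rewrite /open_rel => /orP[/wH|/wH] ->; rewrite ?orbT.
have zS' : z \in S' by move/fintype.subsetP: sSS'; apply.
have z'in : z' \in Cj'.
  move/fintype.subsetP: sub1 => /(_ z zin); rewrite !inE => cz.
  apply: (connect_trans cz); apply: connect1.
  by move: ezz'; rewrite /open_rel !in_rset /= zS' z'S' !andbT.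
have : z' |: Cj \subset Cj' by rewrite finset.subUset sub1 andbT finset.sub1set.
move=> /subset_leq_card; rewrite cardsU1 z'out => h.
by rewrite (leq_trans (geq_minr _ _)) // (leq_trans _ h).
Qed.

Lemma Pk_local n (H : fin_graph n) x k (S : {set 'I_n}) :
  fball H x k.-1 \subset S -> Pk p (rset H S) x k = Pk p H x k.
Proof.
move=> BS; apply/eqP; rewrite eq_le Pk_mono ?rset_sub //=.
rewrite /Pk -(marg_perc p _ (rset_sub H S)); apply: ler_sum => w _.
have [wG|wG] := boolP (w \subset Glt H); last first.
  by rewrite perc_weightE (negbTE wG) !mul0r.
apply: ler_wpM2l; first exact: weight_ge0.
have wH : w \subset H.
  apply: (fintype.subset_trans wG); apply/fintype.subsetP => e; rewrite inE.
  by case/andP.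
have -> : w :&: rset H S = rset w S.
  apply/setP => e; rewrite !inE; case ew: (e \in w) => //=.
  by move/fintype.subsetP: wH => /(_ e ew) ->.
rewrite ler_nat; case h: (k <= _)%N => //=; rewrite lt0b.
case: k h BS => [|k] h BS //=.
have := ball_card x k wH; rewrite (minn_idPr h) => h2.
apply: (leq_trans h2); apply: subset_leq_card; apply: cluster_mono.
exact: rset_mono.
Qed.

End Ball.

Set Implicit Arguments.
Local Open Scope classical_set_scope.
Local Close Scope classical_set_scope.

Section Transport.
Variable R : realType.
Variable p : R.
Hypothesis hp : 0 <= p <= 1.
Variables (n m : nat) (f : 'I_n -> 'I_m) (S : {set 'I_n}) (G : fin_graph n).
Hypothesis finj : {in S &, injective f}.
Hypothesis GS : forall e, e \in G -> (e.1 \in S) && (e.2 \in S).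
Hypothesis Gsym : forall a b, (a, b) \in G -> (b, a) \in G.

Definition fG : fin_graph m := [set (f e.1, f e.2) | e in G].
Definition tau (e : 'I_n * 'I_n) : 'I_m * 'I_m :=
  if (f e.1 < f e.2)%N then (f e.1, f e.2) else (f e.2, f e.1).

Lemma GltP k (H : fin_graph k) e : e \in Glt H = (e \in H) && (e.1 < e.2)%N.
Proof. by rewrite inE. Qed.

Lemma fneq a b : a \in S -> b \in S -> a != b -> f a != f b.
Proof. by move=> aS bS; apply: contra => /eqP /finj -> //. Qed.

Lemma tau_inj : {in Glt G &, injective tau}.
Proof.
move=> [a b] [a' b']; rewrite !GltP /= => /andP[/GS/andP[aS bS] ab] /andP[/GS/andP[a'S b'S] ab'].
move: aS bS a'S b'S => /= aS bS a'S b'S.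
rewrite /tau /=; case: ifP => _; case: ifP => _ [] /= h1 h2.
- by rewrite (finj aS a'S h1) (finj bS b'S h2).
- have e1 := finj aS b'S h1; have e2 := finj bS a'S h2.
  by move: ab ab'; rewrite e1 e2 => ab ab'; move: (ltn_trans ab ab'); rewrite ltnn.
- have e1 := finj bS a'S h1; have e2 := finj aS b'S h2.
  by move: ab ab'; rewrite e1 e2 => ab ab'; move: (ltn_trans ab ab'); rewrite ltnn.
- by rewrite (finj aS a'S h2) (finj bS b'S h1).
Qed.

Lemma tau_img : tau @: Glt G = Glt fG.
Proof.
apply/setP => e'; apply/imsetP/idP.
  move=> [[a b]]; rewrite GltP /= => /andP[abG ab] ->.
  have /andP[aS bS] := GS abG.
  have fab : f a != f b by apply: fneq => //; rewrite neq_ltn ab.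
  rewrite /tau /= GltP; case: ifP => h /=.
    by rewrite h andbT; apply/imsetP; exists (a, b).
  rewrite andbC; move: fab; rewrite neq_ltn h /= => -> /=.
  by apply/imsetP; exists (b, a) => //; apply: Gsym.
rewrite GltP => /andP[/imsetP[[a b] abG ->]] /= fab.
have /andP[aS bS] := GS abG.
have : a != b by apply: contraTneq fab => ->; rewrite ltnn.
rewrite neq_ltn => /orP[ab|ba].
  by exists (a, b); rewrite ?GltP ?abG //= /tau /= fab.
exists (b, a); first by rewrite GltP Gsym.
by rewrite /tau /= ltnNge (ltnW fab).
Qed.

Lemma mem_tau (w : fin_graph n) e : w \subset Glt G -> e \in Glt G ->
  (tau e \in tau @: w) = (e \in w).
Proof.
move=> /fintype.subsetP wG eG; apply/imsetP/idP; last by move=> ew; exists e.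
by move=> [e' e'w h]; rewrite (tau_inj eG (wG _ e'w) h).
Qed.

Lemma sum_transport (F : fin_graph m -> R) :
  \sum_w' perc_weight p fG w' * F w' = \sum_w perc_weight p G w * F (tau @: w).
Proof.
rewrite !Esum.
rewrite (reindex_onto (fun w : fin_graph n => tau @: w)
   (fun w' : fin_graph m => Glt G :&: tau @^-1: w')) /=; last first.
  move=> w' /fintype.subsetP w'G; apply/setP => e'; apply/imsetP/idP.
    by move=> [e]; rewrite !inE => /andP[_ h] ->.
  move=> e'w'; have := w'G e' e'w'; rewrite -tau_img => /imsetP[e eG ee'].
  by exists e => //; rewrite finset.in_setI eG /= !inE -ee' e'w'.
apply: eq_big => w.
  apply/andP/idP.
    by move=> [_ /eqP <-]; apply: finset.subsetIl.
  move=> wG; split; first by rewrite -tau_img; apply: imsetS.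
  apply/eqP/setP => e; rewrite finset.in_setI; case eG: (e \in Glt G) => /=.
    by rewrite inE mem_tau.
  by apply/esym/negbTE; apply: contraFN eG; apply: (fintype.subsetP wG).
move=> /andP[_ /eqP wE]; have wG : w \subset Glt G by rewrite -wE finset.subsetIl.
congr (_ * _).
rewrite -tau_img big_imset /=; last exact: tau_inj.
by apply: eq_bigr => e eG; rewrite mem_tau.
Qed.

Lemma open_S (w : fin_graph n) a b : w \subset G -> open_rel w a b -> (a \in S) && (b \in S).
Proof.
move=> /fintype.subsetP wG; rewrite /open_rel => /orP[/wG/GS|/wG/GS] //=.
by rewrite andbC.
Qed.

Lemma cluster_S (w : fin_graph n) x : w \subset G -> x \in S -> perc_cluster w x \subset S.
Proof.
move=> wG xS; apply/fintype.subsetP => y; rewrite inE => c.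
have cl : closed_mem (open_rel w) (mem S).
  by move=> a b /(open_S wG) /andP[/= -> ->].
by rewrite -(closed_connect cl c).
Qed.

Lemma open_tau1 (w : fin_graph n) a b : open_rel (tau @: w) a b ->
  exists u v, [/\ open_rel w u v, a = f u & b = f v].
Proof.
rewrite /open_rel => /orP[/imsetP[[u v] uvw]|/imsetP[[u v] uvw]]; rewrite /tau /=;
  case: ifP => _ [-> ->].
- by exists u, v; rewrite uvw.
- by exists v, u; rewrite uvw orbT.
- by exists v, u; rewrite uvw orbT.
- by exists u, v; rewrite uvw.
Qed.

Lemma open_tau2 (w : fin_graph n) u v : open_rel w u v -> open_rel (tau @: w) (f u) (f v).
Proof.
rewrite /open_rel => /orP[] uvw.
  have := imset_f tau uvw; rewrite /tau /=; case: ifP => _ ->; by rewrite ?orbT.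
have := imset_f tau uvw; rewrite /tau /=; case: ifP => _ ->; by rewrite ?orbT.
Qed.

Lemma cluster_tau (w : fin_graph n) x : w \subset G -> x \in S ->
  perc_cluster (tau @: w) (f x) = f @: perc_cluster w x.
Proof.
move=> wG xS; have CS := fintype.subsetP (cluster_S wG xS).
apply/setP => y; apply/idP/idP.
  rewrite inE => c.
  have cl : closed_mem (open_rel (tau @: w)) (mem (f @: perc_cluster w x)).
    move=> a b /open_tau1 [u [v [uv -> ->]]] /=.
    have /andP[uS vS] := open_S wG uv.
    apply/imsetP/imsetP => -[z zC fz].
      have uz := finj uS (CS _ zC) fz.
      exists v => //; rewrite inE; rewrite inE -uz in zC.
      exact: (connect_trans zC (connect1 uv)).
    have vz := finj vS (CS _ zC) fz.
    exists u => //; rewrite inE; rewrite inE -vz in zC.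
    rewrite open_relC in uv.
    exact: (connect_trans zC (connect1 uv)).
  by rewrite -(closed_connect cl c); apply: imset_f; apply: x_in_cluster.
move=> /imsetP[z]; rewrite inE => c ->.
have cl : closed_mem (open_rel w)
    (mem [set u | connect (open_rel (tau @: w)) (f x) (f u)]).
  move=> a b ab /=; rewrite !inE; apply/idP/idP => h.
    exact: (connect_trans h (connect1 (open_tau2 ab))).
  rewrite open_relC in ab.
  exact: (connect_trans h (connect1 (open_tau2 ab))).
have := closed_connect cl c; rewrite !inE connect0 => <-.
by [].
Qed.

Lemma card_cluster_tau (w : fin_graph n) x : w \subset G -> x \in S ->
  #|perc_cluster (tau @: w) (f x)| = #|perc_cluster w x|.
Proof.
move=> wG xS; rewrite cluster_tau // card_in_imset //.
move=> a b /(fintype.subsetP (cluster_S wG xS)) aS /(fintype.subsetP (cluster_S wG xS)) bS.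
exact: finj.
Qed.

Lemma Pk_transport x k : x \in S -> Pk p fG (f x) k = Pk p G x k.
Proof.
move=> xS; rewrite /Pk sum_transport; apply: eq_bigr => w _.
have [wG|wG] := boolP (w \subset Glt G); last first.
  by rewrite perc_weightE (negbTE wG) !mul0r.
rewrite card_cluster_tau //.
apply: (fintype.subset_trans wG); apply/fintype.subsetP => e; rewrite inE.
by case/andP.
Qed.

End Transport.

Set Implicit Arguments.
Local Open Scope classical_set_scope.
Local Close Scope classical_set_scope.

Local Notation wth := Defs.within.
Section Rooted.
Variable R : realType.
Variable p : R.
Hypothesis hp : 0 <= p <= 1.

Definition symg (a : rooted_graph) : rooted_graph := fun i j => a i j && a j i.
Definition symrg (a : rooted_graph) := forall i j, a i j = a j i.

Lemma symg_sym a : symrg (symg a).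
Proof. by move=> i j; rewrite /symg andbC. Qed.

Lemma restr_sym a N : symrg a -> forall x y, (x, y) \in restr a N -> (y, x) \in restr a N.
Proof. by move=> sa x y; rewrite !inE /= sa. Qed.

Lemma perc_ge_Pk a k N : perc_ge p a k N = Pk p (restr a N) ord0 k.
Proof. by []. Qed.

Lemma perc_ge_step a k N : symrg a -> perc_ge p a k N <= perc_ge p a k N.+1.
Proof.
move=> sa; pose f := widen_ord (leqnSn N.+1).
have finj : {in [set: 'I_N.+1] &, injective f}.
  by move=> x y _ _ /(congr1 val) /= /val_inj.
have GS : forall e, e \in restr a N -> (e.1 \in [set: 'I_N.+1]) && (e.2 \in [set: 'I_N.+1]).
  by move=> e _; rewrite !finset.in_setT.
have := Pk_transport p finj GS (restr_sym sa) k (finset.in_setT ord0).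
have -> : f ord0 = ord0 by apply: val_inj.
rewrite !perc_ge_Pk => <-; apply: (Pk_mono hp).
apply/fintype.subsetP => e /imsetP[[x y]]; rewrite inE /= => axy ->.
by rewrite inE.
Qed.

Lemma perc_ge_homo a k : symrg a -> {homo perc_ge p a k : n m / (n <= m)%N >-> n <= m}.
Proof.
move=> sa; apply: homo_leq; [exact: lexx| |by move=> i; apply: perc_ge_step].
by move=> y x z; apply: le_trans.
Qed.

Lemma perc_ge_cvg a k : symrg a -> cvgn (perc_ge p a k).
Proof.
move=> sa; apply: nondecreasing_is_cvgn; first exact: perc_ge_homo.
by exists 1 => _ [N _ <-]; rewrite perc_ge_Pk Pk_le1.
Qed.

Lemma perc_ge_le_lim a k N : symrg a -> perc_ge p a k N <= limn (perc_ge p a k).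
Proof. by move=> sa; apply: nondecreasing_cvgn_le; [exact: perc_ge_homo|exact: perc_ge_cvg]. Qed.

Lemma lim_perc_ge_ge0 a k : symrg a -> 0 <= limn (perc_ge p a k).
Proof. by move=> sa; apply: le_trans (perc_ge_le_lim _ 0 sa); rewrite perc_ge_Pk Pk_ge0. Qed.

Lemma lim_perc_ge_le1 a k : symrg a -> limn (perc_ge p a k) <= 1.
Proof.
move=> sa; apply: limr_le; first exact: perc_ge_cvg.
by apply: nearW => N; rewrite perc_ge_Pk Pk_le1.
Qed.

Lemma within0 a r : wth a r 0.
Proof. by elim: r => [|r IH] //=; left. Qed.

Lemma within_mono a j r x : (j <= r)%N -> wth a j x -> wth a r x.
Proof.
elim: r => [|r IH]; first by rewrite leqn0 => /eqP ->.
rewrite leq_eqVlt => /orP[/eqP -> //|]; rewrite ltnS => jr h /=; left; exact: IH.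
Qed.

Lemma within_sub (a b : rooted_graph) r x : (forall i j, a i j -> b i j) -> wth a r x -> wth b r x.
Proof.
move=> ab; elim: r x => [|r IH] x //= [h|[y [hy ayx]]]; first by left; apply: IH.
by right; exists y; split; [apply: IH|apply: ab].
Qed.

Lemma fball_within a N j : symrg a ->
  fball (restr a N) ord0 j \subset [set i : 'I_N.+1 | `[< wth a j i >]].
Proof.
move=> sa; elim: j => [|j IH].
  apply/fintype.subsetP => i; rewrite finset.in_set /= inE => /eqP ->.
  by apply/asboolP.
apply/fintype.subsetP => i /=; rewrite finset.in_setU => /orP[h|].
  move/fintype.subsetP: IH => /(_ i h); rewrite !finset.in_set => /asboolP wi.
  by apply/asboolP; left.
rewrite inE => /exists_inP[z zb]; rewrite !inE /= => h.
move/fintype.subsetP: IH => /(_ z zb); rewrite finset.in_set => /asboolP wz.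
right; exists z; split => //.
by case/orP: h => // ; rewrite sa.
Qed.

Lemma lim_le_ball k a b : symrg a -> symrg b -> ball_iso k a b ->
  limn (perc_ge p a k) <= limn (perc_ge p b k).
Proof.
move=> sa sb [phi [phi0 phiin phiinj phisurj phiadj]].
apply: limr_le; first exact: perc_ge_cvg.
apply: nearW => N.
pose S := [set i : 'I_N.+1 | `[< wth a k.-1 i >]].
have hS i : i \in S -> wth a k i.
  by rewrite inE => /asboolP; apply: within_mono; apply: leq_pred.
rewrite perc_ge_Pk -(Pk_local hp (S := S)); last exact: fball_within.
pose M := (\max_(i : 'I_N.+1) phi i)%N.
have phiM (i : 'I_N.+1) : (phi i < M.+1)%N by rewrite ltnS; apply: (leq_bigmax (F := fun i : 'I_N.+1 => phi i)).
pose f (i : 'I_N.+1) : 'I_M.+1 := inord (phi i).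
have fval i : (f i : nat) = phi i by rewrite /f inordK.
have finj : {in S &, injective f}.
  move=> x y xS yS /(congr1 (@nat_of_ord _)); rewrite !fval => h.
  by apply: val_inj; apply: phiinj => //; apply: hS.
have GS : forall e, e \in rset (restr a N) S -> (e.1 \in S) && (e.2 \in S).
  by move=> e; rewrite in_rset => /and3P[_ -> ->].
have Gsym : forall x y, (x, y) \in rset (restr a N) S -> (y, x) \in rset (restr a N) S.
  by move=> x y; rewrite !in_rset /= => /and3P[/restr_sym -> //= -> ->].
have oS : ord0 \in S by rewrite inE; apply/asboolP; apply: within0.
have := Pk_transport p finj GS Gsym k oS.
have -> : f ord0 = ord0 by apply: val_inj => /=; rewrite fval phi0.
move=> <-; apply: (@le_trans _ _ (Pk p (restr b M) ord0 k)); last first.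
  by rewrite -perc_ge_Pk; apply: perc_ge_le_lim.
apply: (Pk_mono hp).
apply/fintype.subsetP => e /imsetP[[x y]]; rewrite in_rset /= => /and3P[axy xS yS] ->.
rewrite inE /= !fval -phiadj //; [by move: axy; rewrite inE|exact: hS|exact: hS].
Qed.

End Rooted.

Set Implicit Arguments.
Local Open Scope classical_set_scope.
Local Close Scope classical_set_scope.

Section Local.
Variable R : realType.
Variable p : R.
Hypothesis hp : 0 <= p <= 1.

Lemma iso_inv r a b : ball_iso r a b -> ball_iso r b a.
Proof.
move=> [phi [phi0 phiin phiinj phisurj phiadj]].
pose psi y := match pselect (wth b r y) with
  | left h => sval (cid2 (phisurj y h)) | right _ => y end.
have psiP y : wth b r y -> wth a r (psi y) /\ phi (psi y) = y.
  move=> h; rewrite /psi; case: pselect => [h'|//].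
  by case: cid2 => x /= H1 H2.
exists psi; split.
- have [w0 e0] := psiP 0%N (within0 b r).
  by apply: phiinj => //; [exact: within0|rewrite e0 phi0].
- by move=> y /psiP [].
- by move=> x y hx hy e; rewrite -(psiP x hx).2 -(psiP y hy).2 e.
- move=> x hx; exists (phi x); first exact: phiin.
  have [h1 h2] := psiP _ (phiin x hx); exact: phiinj h1 hx h2.
- move=> x y hx hy; have [hx1 hx2] := psiP x hx; have [hy1 hy2] := psiP y hy.
  by rewrite phiadj // hx2 hy2.
Qed.

Lemma wsa (a : rooted_graph) j x : wth (symg a) j x -> wth a j x.
Proof. by apply: within_sub => i k /andP[]. Qed.

Lemma iso_symg r a b : ball_iso r a b -> ball_iso r (symg a) (symg b).
Proof.
move=> [phi [phi0 phiin phiinj phisurj phiadj]].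
have fwd j : (j <= r)%N -> forall x, wth (symg a) j x -> wth (symg b) j (phi x).
  elim: j => [|j IH] jr x H; first by move: H => /= ->.
  have xa : wth a r x by apply: (within_mono jr); apply: wsa.
  case: H => [h|[y [hy say]]]; first by left; apply: IH => //; apply: ltnW.
  have ya : wth a r y by apply: (within_mono (ltnW jr)); apply: wsa.
  right; exists (phi y); split; first by apply: IH => //; apply: ltnW.
  by move: say; rewrite /symg -!phiadj.
have bwd j : (j <= r)%N -> forall y, wth (symg b) j y ->
    exists2 x, wth (symg a) j x & phi x = y.
  elim: j => [|j IH] jr y H; first by move: H => /= ->; exists 0%N.
  have yb : wth b r y by apply: (within_mono jr); apply: wsa.
  case: H => [h|[y' [hy' sby]]].
    by have [x hx ex] := IH (ltnW jr) y h; exists x => //; left.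
  have [x' hx' ex'] := IH (ltnW jr) y' hy'.
  have [x hx ex] := phisurj y yb.
  have x'a : wth a r x' by apply: (within_mono (ltnW jr)); apply: wsa.
  exists x => //; right; exists x'; split => //.
  by rewrite /symg !phiadj // ex ex'.
exists phi; split => //.
- exact: fwd.
- by move=> x y /wsa hx /wsa hy; apply: phiinj.
- exact: bwd.
- by move=> x y /wsa hx /wsa hy; rewrite /symg !phiadj.
Qed.

Definition gk (k : nat) (a : rooted_graph) : R := limn (perc_ge p (symg a) k).

Lemma gk_ge0 k a : 0 <= gk k a.
Proof. exact: (lim_perc_ge_ge0 hp _ (symg_sym a)). Qed.

Lemma gk_le1 k a : gk k a <= 1.
Proof. exact: (lim_perc_ge_le1 hp _ (symg_sym a)). Qed.

Lemma gk_local k : local_fun (gk k).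
Proof.
exists k => a b iso; apply/le_anti/andP; split; apply: (lim_le_ball hp);
  try exact: symg_sym.
  exact: iso_symg.
by apply: iso_symg; apply: iso_inv.
Qed.

Lemma symg_id a : symrg a -> symg a = a.
Proof.
by move=> sa; apply/funext => i; apply/funext => j; rewrite /symg (sa j i) andbb.
Qed.

Lemma gkE k a : symrg a -> gk k a = limn (perc_ge p a k).
Proof. by move=> sa; rewrite /gk symg_id. Qed.

Local Open Scope classical_set_scope.
Lemma gk_cvg a : symrg a -> (fun k => gk k a) @ \oo --> perc_inf p a.
Proof.
move=> sa.
have hom : {homo (fun k => gk k a) : n m / (n <= m)%N >-> m <= n}.
  apply: homo_leq; [exact: lexx| by move=> y x z h1 h2; apply: le_trans h2 h1|].
  move=> k; rewrite !gkE //; apply: ler_lim; try exact: perc_ge_cvg.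
  apply: nearW => N; rewrite !perc_ge_Pk; apply: ler_sum => w _.
  apply: ler_wpM2l; first exact: weight_ge0.
  by rewrite ler_nat; case: (leqP k.+1 _) => //= h; rewrite lt0b; apply: ltnW.
have cv : cvgn (fun k => gk k a).
  by apply: nonincreasing_is_cvgn => //; exists 0 => _ [k _ <-]; apply: gk_ge0.
have -> : perc_inf p a = limn (fun k => gk k a).
  by rewrite /perc_inf; congr (limn _); apply/funext => k; rewrite gkE.
exact: cv.
Qed.

End Local.

Set Implicit Arguments.
Local Open Scope classical_set_scope.
Local Close Scope classical_set_scope.

Section RootedAt.
Variable R : realType.
Variable p : R.
Hypothesis hp : 0 <= p <= 1.
Variables (n : nat) (G : fin_graph n) (v : 'I_n).
Hypothesis Gsym : forall x y, (x, y) \in G -> (y, x) \in G.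

Definition encn (x : nat) : nat := if x == v then 0%N else if (x < v)%N then x.+1 else x.

Lemma encn_lt (x : 'I_n) : (encn x < n.+1)%N.
Proof. rewrite /encn; case: eqP => _ //; case: (ltnP x v) => h; move: (ltn_ord x) (ltn_ord v) h; lia. Qed.

Lemma dec_enc (x : 'I_n) : Defs.decode v (encn x) = Some x.
Proof.
rewrite /Defs.decode /encn; case: (eqVneq (x : nat) (v : nat)) => [xv|xv].
  by rewrite /=; congr Some; apply: val_inj; exact: (esym xv).
case: (ltnP x v) => h /=.
  by rewrite h /= valK.
have -> : ((x : nat) == 0%N) = false by move: xv h; lia.
have -> : (x <= v)%N = false by move: xv h; lia.
by rewrite valK.
Qed.

Lemma dec_some i (x : 'I_n) : Defs.decode v i = Some x -> i = encn x.
Proof.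
rewrite /Defs.decode /encn; case: eqP => [-> [<-]|i0]; first by rewrite eqxx.
case: insubP => // y _ yE [yx]; rewrite -yx yE.
case: (leqP i v) => h.
  have -> : (i.-1 == v) = false by move: i0 h; lia.
  have -> : (i.-1 < v)%N by move: i0 h; lia.
  by move: i0; lia.
have -> : (i == v) = false by move: h; lia.
by rewrite ltnNge (ltnW h).
Qed.

Variable N : nat.
Hypothesis nN : (n <= N)%N.

Definition enc (x : 'I_n) : 'I_N.+1 := inord (encn x).

Lemma encE x : (enc x : nat) = encn x.
Proof. by rewrite /enc inordK // (leq_trans (encn_lt x)). Qed.

Lemma restr_rooted : restr (symg (rooted_at G v)) N = fG enc G.
Proof.
apply/setP => [[i j]]; rewrite inE /= /symg /rooted_at.
apply/idP/idP.
  case ei: (Defs.decode v i) => [x|] //; case ej: (Defs.decode v j) => [y|] // /andP[xyG _].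
  apply/imsetP; exists (x, y) => //=.
  by congr pair; apply: val_inj; rewrite /= encE; apply: dec_some.
move=> /imsetP[[x y] xyG [-> ->]] /=.
by rewrite !encE !dec_enc xyG Gsym.
Qed.

Lemma Pk_rooted k : Pk p (restr (symg (rooted_at G v)) N) ord0 k = Pk p G v k.
Proof.
have finj : {in [set: 'I_n] &, injective enc}.
  move=> x y _ _ /(congr1 (@nat_of_ord _)); rewrite !encE /encn => h.
  apply: val_inj => /=; move: h (ltn_ord x) (ltn_ord y).
  case: eqP => hx; case: eqP => hy; case: (ltnP x v) => h1; case: (ltnP y v) => h2; lia.
have GS : forall e, e \in G -> (e.1 \in [set: 'I_n]) && (e.2 \in [set: 'I_n]).
  by move=> e _; rewrite !finset.in_setT.
have := Pk_transport p finj GS Gsym k (finset.in_setT v).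
have -> : enc v = ord0 by apply: val_inj; rewrite /= encE /encn eqxx.
by rewrite restr_rooted.
Qed.

End RootedAt.

Lemma gk_rooted (R : realType) (p : R) (hp : 0 <= p <= 1) n (G : fin_graph n) v k :
  (forall x y, (x, y) \in G -> (y, x) \in G) ->
  gk p k (rooted_at G v) = Pk p G v k.
Proof.
move=> Gsym; rewrite /gk; apply: cvg_lim => //.
apply: cvg_near_cst; exists n => // N /= nN.
by rewrite perc_ge_Pk Pk_rooted.
Qed.

Set Implicit Arguments.
Local Open Scope classical_set_scope.

Section Analysis.
Variable R : realType.

Lemma exp_cvg (I : nat -> finType) (pi Y : forall n, I n -> R) (c : R) :
  (forall n i, 0 <= pi n i) -> (forall n, \sum_i pi n i = 1) ->
  (forall n i, 0 <= Y n i <= 1) ->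
  (forall eps, 0 < eps ->
     (fun n => \sum_i pi n i * (`|Y n i - c| > eps)%R%:R) @ \oo --> 0) ->
  (fun n => \sum_i pi n i * Y n i) @ \oo --> c.
Proof.
move=> pi0 pi1 Y01 hq; apply/cvgrPdist_le => e e0.
pose B := 1 + `|c|.
have B0 : 0 < B by rewrite /B; have := normr_ge0 c; lra.
have e2 : 0 < e / 2 by lra.
have eB : 0 < e / 2 / B by apply: divr_gt0.
move: (hq _ e2) => /cvgrPdist_le /(_ _ eB); apply: filterS => n hn.
have qge0 : 0 <= \sum_i pi n i * (`|Y n i - c| > e / 2)%R%:R.
  by apply: sumr_ge0 => i _; apply: mulr_ge0.
have hq' : B * \sum_i pi n i * (`|Y n i - c| > e / 2)%R%:R <= e / 2.
  move: hn; rewrite sub0r normrN ger0_norm // => hn.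
  by rewrite -(ler_pM2l B0) in hn; move: hn; rewrite mulrCA divff ?mulr1 // gt_eqF.
have -> : c - \sum_i pi n i * Y n i = \sum_i pi n i * (c - Y n i).
  rewrite -[c in LHS]mul1r -(pi1 n) big_distrl /= -sumrB.
  by apply: eq_bigr => i _; rewrite mulrBr mulrC.
apply: (le_trans (ler_norm_sum _ _ _)).
apply: (@le_trans _ _ (\sum_i pi n i * (e / 2 + B * (`|Y n i - c| > e / 2)%R%:R))).
  apply: ler_sum => i _; rewrite normrM ger0_norm //; apply: ler_wpM2l => //.
  have := Y01 n i; case: ltrP => h /= /andP[y0 y1].
    have : `|c - Y n i| <= `|c| + `|Y n i| by rewrite -(normrN (Y n i)) ler_normD.
    rewrite (ger0_norm y0) /B; lra.
  by rewrite distrC; lra.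
rewrite (eq_bigr (fun i => e / 2 * pi n i + B * (pi n i * (`|Y n i - c| > e / 2)%R%:R)));
  last by move=> i _; ring.
by rewrite big_split /= -big_distrr -big_distrr /= pi1 mulr1; lra.
Qed.

Lemma limsup_bound (s a : R^nat) (A : R) :
  (forall n, 0 <= s n) -> (forall n, s n <= a n) -> a @ \oo --> A ->
  0 <= limn_sup s <= A.
Proof.
move=> s0 sa aA.
have [M hM] : has_ubound (range a).
  by apply: bounded_fun_has_ubound; apply: cvg_seq_bounded; apply/cvg_ex; exists A.
have ubs : has_ubound (range s).
  by exists M => _ [n _ <-]; apply: (le_trans (sa n)); apply: hM; exists n.
have sups_ge n : s n <= sups s n.
  by apply: ub_le_sup; [exact: has_ubound_sdrop|exists n => /=].
have cv : cvgn (sups s).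
  apply: nonincreasing_is_cvgn; first exact: nonincreasing_sups.
  by exists 0 => _ [n _ <-]; apply: (le_trans (s0 n)).
apply/andP; split.
  by apply: limr_ge => //; apply: nearW => n; apply: (le_trans (s0 n)).
apply/ler_addgt0Pr => e e0.
apply: limr_le => //.
move/cvgrPdist_le: aA => /(_ e e0) [K _ hK].
exists K => // n /= Kn.
apply: ge_sup; first by exists (s n); exists n => /=.
move=> _ [m /= nm <-]; apply: (le_trans (sa m)).
have := hK m (leq_trans Kn nm); rewrite /= => h.
have : a m - A <= `|A - a m| by rewrite distrC ler_norm.
lra.
Qed.

Lemma int_cvg (d : measure_display) (Omega : measurableType d)
  (Pmu : probability Omega R) (g_ : nat -> Omega -> R) (gl : Omega -> R) :
  (forall k, measurable_fun setT (g_ k)) -> (forall o, g_ ^~ o @ \oo --> gl o) ->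
  (forall k o, `|g_ k o| <= 1) ->
  (fun k => Rintegral Pmu setT (g_ k)) @ \oo --> Rintegral Pmu setT gl.
Proof.
move=> mg cg bg.
have mgl : measurable_fun setT gl.
  by apply: (measurable_fun_cvg mg) => o _; apply: cg.
have cE o : (fun k => (g_ k o)%:E) @ \oo --> (gl o)%:E.
  by apply: cvg_EFin; [exact: nearW|exact: cg].
have [igl _ hc] := @dominated_convergence _ _ _ Pmu setT measurableT
  (fun k o => (g_ k o)%:E) (fun o => (gl o)%:E) (EFin \o cst 1)
  (fun k => proj2 (measurable_EFinP _ _) (mg k))
  (proj2 (measurable_EFinP _ _) mgl)
  (aeW _ (fun o _ => cE o))
  (finite_measure_integrable_cst _ 1 measurableT)
  (aeW _ (fun o k _ => bg k o)).
have fin := integrable_fin_num measurableT igl.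
move: hc; rewrite -[X in _ --> X]fineK // => hc.
exact: (fine_cvg hc).
Qed.

End Analysis.

Set Implicit Arguments.
Local Open Scope classical_set_scope.
Local Close Scope classical_set_scope.

Unset Implicit Arguments.
Section Comb.
Variable R : realType.
Variable p : R.
Hypothesis hp : 0 <= p <= 1.
Variable PG : forall n : nat, fin_graph n -> R.
Hypothesis hP0 : forall n G, 0 <= PG n G.
Hypothesis hP1 : forall n, \sum_(G : fin_graph n) PG n G = 1.

Lemma pw_ge0 n (G w : fin_graph n) : 0 <= PG n G * perc_weight p G w.
Proof. by apply: mulr_ge0; [exact: hP0|exact: weight_ge0]. Qed.

Lemma Eperc_le n (F F' : fin_graph n -> fin_graph n -> R) :
  (forall G w, F G w <= F' G w) -> Eperc PG p F <= Eperc PG p F'.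
Proof.
move=> h; apply: ler_sum => G _; apply: ler_sum => w _.
by apply: ler_wpM2l; [exact: pw_ge0|exact: h].
Qed.

Lemma Eperc_ge0 n (F : fin_graph n -> fin_graph n -> R) :
  (forall G w, 0 <= F G w) -> 0 <= Eperc PG p F.
Proof.
move=> h; apply: sumr_ge0 => G _; apply: sumr_ge0 => w _.
by apply: mulr_ge0; [exact: pw_ge0|exact: h].
Qed.

Lemma Eperc_lin n (F1 F2 : fin_graph n -> fin_graph n -> R) c :
  Eperc PG p (fun G w => F1 G w - F2 G w + c) = Eperc PG p F1 - Eperc PG p F2 + c.
Proof.
have Ec : \sum_G \sum_w PG n G * perc_weight p G w * c = c.
  rewrite -[RHS]mul1r -(hP1 n) big_distrl /=; apply: eq_bigr => G _.
  by rewrite -big_distrl /= -big_distrr /= weight_sum1 // mulr1.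
rewrite /Eperc.
transitivity (\sum_G \sum_w (PG n G * perc_weight p G w * F1 G w -
   PG n G * perc_weight p G w * F2 G w) + \sum_G \sum_w PG n G * perc_weight p G w * c).
  rewrite -big_split; apply: eq_bigr => G _; rewrite -big_split; apply: eq_bigr => w _.
  by rewrite /=; ring.
rewrite Ec; congr (_ + _); rewrite -sumrB; apply: eq_bigr => G _; by rewrite -sumrB.
Qed.

Lemma Eperc_Z n (F : fin_graph n -> fin_graph n -> R) c :
  Eperc PG p (fun G w => c * F G w) = c * Eperc PG p F.
Proof.
rewrite /Eperc big_distrr; apply: eq_bigr => G _; rewrite big_distrr.
by apply: eq_bigr => w _; rewrite /= mulrCA.
Qed.

End Comb.

Set Implicit Arguments.
Section Giant.
Lemma cluster_eq n (w : fin_graph n) x y :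
  y \in perc_cluster w x -> perc_cluster w y = perc_cluster w x.
Proof.
have cs := sym_connect_sym (fun a b => open_relC w a b).
rewrite inE => cxy; apply/setP => z; rewrite !inE; apply/idP/idP => h.
  exact: connect_trans cxy h.
by rewrite cs in cxy; exact: connect_trans cxy h.
Qed.

Lemma giant_same n (w : fin_graph n) x y :
  in_giant w x -> in_giant w y -> perc_cluster w x = perc_cluster w y.
Proof.
rewrite /in_giant; case: pickP => [u0 _|_] // hx hy.
by rewrite (cluster_eq hx) (cluster_eq hy).
Qed.

Lemma sum_mem_card n (A : {set 'I_n}) : (\sum_v ((v \in A) : nat) = #|A|)%N.
Proof.
rewrite -sum1_card [RHS]big_mkcond /=; apply: eq_bigr => v _.
by case: (v \in A).
Qed.

Lemma giant_small n (w : fin_graph n) k :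
  (\sum_v ((in_giant w v && ~~ (k <= #|perc_cluster w v|)%N) : nat) <= k)%N.
Proof.
case: (pselect (exists v0, in_giant w v0 && ~~ (k <= #|perc_cluster w v0|)%N)).
  move=> [v0 /andP[g0 a0]].
  apply: (@leq_trans (\sum_v ((v \in perc_cluster w v0) : nat))).
    apply: leq_sum => v _; case/boolP: (in_giant w v && _) => //= /andP[gv _].
    by rewrite -(giant_same gv g0) x_in_cluster.
  by rewrite sum_mem_card; move: a0; rewrite -ltnNge => /ltnW.
move=> nex; rewrite big1 // => v _; case h: (in_giant w v && _) => //.
by exfalso; apply: nex; exists v.
Qed.

Lemma ineq1_nat n (w : fin_graph n) k :
  (\sum_v ((~~ in_giant w v && (k <= #|perc_cluster w v|)%N) : nat)
   + \sum_v (in_giant w v : nat)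
   <= \sum_v ((k <= #|perc_cluster w v|)%N : nat) + k)%N.
Proof.
rewrite -big_split /=.
rewrite (eq_bigr (fun v => ((k <= #|perc_cluster w v|)%N : nat)
   + ((in_giant w v && ~~ (k <= #|perc_cluster w v|)%N) : nat))%N); last first.
  by move=> v _; case: (in_giant w v); case: (k <= _)%N.
by rewrite big_split /= leq_add2l giant_small.
Qed.

Lemma ineq3_nat n (w : fin_graph n) k :
  (\sum_u \sum_v ([&& (k <= #|perc_cluster w u|)%N, (k <= #|perc_cluster w v|)%N
              & perc_cluster w u != perc_cluster w v] : nat)
   <= 2 * n * \sum_u ((~~ in_giant w u && (k <= #|perc_cluster w u|)%N) : nat))%N.
Proof.
set f := fun u : 'I_n => ((~~ in_giant w u && (k <= #|perc_cluster w u|)%N) : nat).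
apply: (@leq_trans (\sum_u \sum_v (f u + f v))%N).
  apply: leq_sum => u _; apply: leq_sum => v _; rewrite /f.
  case: (boolP (in_giant w u)) => gu; case: (boolP (in_giant w v)) => gv /=;
    case: (k <= _)%N; case: (k <= _)%N => //=; try by case: (_ != _).
  by rewrite (giant_same gu gv) eqxx.
rewrite (eq_bigr (fun u => n * f u + \sum_v f v)%N); last first.
  by move=> u _; rewrite big_split /= sum_nat_const card_ord.
by rewrite big_split /= sum_nat_const card_ord -big_distrr /= -mulnA mul2n -addnn.
Qed.

End Giant.

Set Implicit Arguments.
Local Open Scope classical_set_scope.

Lemma avg01 (R : realType) n (f : 'I_n -> R) :
  (forall v, 0 <= f v <= 1) -> 0 <= (\sum_v f v) / n%:R <= 1.
Proof.
case: n f => [|n] f h; first by rewrite big_ord0 mul0r lexx ler01.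
apply/andP; split.
  by apply: divr_ge0 => //; apply: sumr_ge0 => v _; case/andP: (h v).
rewrite ler_pdivrMr ?ltr0Sn // mul1r.
apply: (@le_trans _ _ (\sum_(v < n.+1) (1 : R))).
  by apply: ler_sum => v _; case/andP: (h v).
by rewrite sumr_const card_ord.
Qed.

Lemma frac01 (R : realType) n m : (m <= n)%N -> 0 <= (m%:R : R) / n%:R <= 1.
Proof.
case: n => [|n] h; first by rewrite invr0 mulr0 lexx ler01.
apply/andP; split; first by apply: divr_ge0.
by rewrite ler_pdivrMr ?ltr0Sn // mul1r ler_nat.
Qed.

Lemma kn_cvg (R : realType) (k : nat) : (fun n => (k%:R : R) / n%:R) @ \oo --> 0.
Proof.
rewrite -cvg_shiftS /=.
have H : (fun n => (k%:R : R) * harmonic n) @ \oo --> (k%:R * 0 : R).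
  by apply: cvgMl_tmp; apply: cvg_harmonic.
by rewrite mulr0 in H.
Qed.

Unset Implicit Arguments.

Theorem proposition2p3 (R : realType) (p : R) (P : forall n : nat, fin_graph n -> R)
  (d : measure_display) (Omega : measurableType d) (Pmu : probability Omega R)
  (X : Omega -> rooted_graph) :
  0 <= p <= 1 ->
  (forall n (G : fin_graph n), 0 <= P n G) ->
  (forall n, \sum_(G : fin_graph n) P n G = 1) ->
  (forall n (G : fin_graph n), P n G != 0 -> simple_graph G) ->
  (forall o, valid_rgraph (X o)) ->
  (forall f : rooted_graph -> R, local_fun f -> measurable_fun setT (f \o X)) ->
  lwc_in_prob P Pmu X ->
  converging_giant P p Pmu X ->
  [/\ 0 < zeta p Pmu X ->
        (fun k => limn_sup (fun n => Prob1 P p (fun (G w : fin_graph n) v =>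
            ~~ in_giant w v && (k <= #|perc_cluster w v|)%N))) @ \oo --> 0,
      zeta p Pmu X = 0 ->
        (fun k => limn_sup (fun n => Prob1 P p (fun (G w : fin_graph n) v =>
            (k <= #|perc_cluster w v|)%N))) @ \oo --> 0
    & (fun k => limn_sup (fun n => Prob2 P p (fun (G w : fin_graph n) u v =>
            [&& (k <= #|perc_cluster w u|)%N, (k <= #|perc_cluster w v|)%N
              & perc_cluster w u != perc_cluster w v]))) @ \oo --> 0].
Proof.
move=> hp P0 P1s Psimple Xvalid Xmeas lwc giant.
have Gsym n (G : fin_graph n) : P n G != 0 -> forall x y, (x, y) \in G -> (y, x) \in G.
  move=> /Psimple /andP[/forallP h _] x y; move: (h x) => /forallP /(_ y) /eqP <-.
  by [].
set z := zeta p Pmu X.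
pose zk k := Rintegral Pmu setT (gk p k \o X).
have Xsym o : symrg (X o) by case: (Xvalid o).
have zk_cvg : zk @ \oo --> z.
  apply: (int_cvg (g_ := fun k => gk p k \o X) (gl := fun o => perc_inf p (X o))).
  - by move=> k; apply: Xmeas; apply: gk_local.
  - by move=> o; apply: gk_cvg.
  - by move=> k o; rewrite /= ger0_norm ?gk_ge0 ?gk_le1.
have u_cvg k : (fun n => Prob1 P p (fun (G w : fin_graph n) v =>
    (k <= #|perc_cluster w v|)%N)) @ \oo --> zk k.
  have E n : Prob1 P p (fun (G w : fin_graph n) v => (k <= #|perc_cluster w v|)%N) =
      \sum_G P n G * ((\sum_v gk p k (rooted_at G v)) / n%:R).
    rewrite /Prob1 /Eperc; apply: eq_bigr => G _.
    case: (eqVneq (P n G) 0) => [->|PG0].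
      by rewrite mul0r big1 // => w _; rewrite !mul0r.
    under eq_bigr do rewrite -mulrA.
    rewrite -big_distrr /=; congr (_ * _).
    under eq_bigr do rewrite mulrA.
    rewrite -big_distrl /=; congr (_ / _).
    under eq_bigr do rewrite big_distrr /=.
    rewrite exchange_big /=; apply: eq_bigr => v _.
    by rewrite (gk_rooted hp v k (Gsym _ _ PG0)).
  have -> : (fun n => Prob1 P p (fun (G w : fin_graph n) v =>
      (k <= #|perc_cluster w v|)%N)) =
      (fun n => \sum_G P n G * ((\sum_v gk p k (rooted_at G v)) / n%:R)).
    by apply/funext => n; apply: E.
  apply: (exp_cvg (I := fun n => fin_graph n) (pi := P)
     (Y := fun n G => (\sum_v gk p k (rooted_at G v)) / n%:R)) => //.
    by move=> n G; apply: avg01 => v; rewrite gk_ge0 ?gk_le1.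
  move=> eps heps; apply: (lwc (gk p k) (gk_local hp k)) => //.
  by exists 1 => a; rewrite ger0_norm ?gk_ge0 ?gk_le1.
have G_cvg : (fun n => Prob1 P p (fun (G w : fin_graph n) v => in_giant w v)) @ \oo --> z.
  have E n : Prob1 P p (fun (G w : fin_graph n) v => in_giant w v) =
      \sum_(q : fin_graph n * fin_graph n) (P n q.1 * perc_weight p q.1 q.2) *
        ((giant_size q.2)%:R / n%:R).
    rewrite /Prob1 /Eperc pair_bigA /=; apply: eq_bigr => q _; congr (_ * (_ / _)).
    rewrite /giant_size -sum_mem_card natr_sum; apply: eq_bigr => v _.
    by rewrite inE.
  have -> : (fun n => Prob1 P p (fun (G w : fin_graph n) v => in_giant w v)) =
      (fun n => \sum_(q : fin_graph n * fin_graph n) (P n q.1 * perc_weight p q.1 q.2) *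
        ((giant_size q.2)%:R / n%:R)) by apply/funext => n; apply: E.
  apply: (exp_cvg (I := fun n => (fin_graph n * fin_graph n)%type)
     (pi := fun n q => P n q.1 * perc_weight p q.1 q.2)
     (Y := fun n q => (giant_size q.2)%:R / n%:R)).
  - by move=> n q; apply: mulr_ge0; [exact: P0|exact: weight_ge0].
  - move=> n; rewrite -(pair_bigA _ (fun G w => P n G * perc_weight p G w)) /=.
    rewrite -(P1s n); apply: eq_bigr => G _.
    by rewrite -big_distrr /= weight_sum1 mulr1.
  - move=> n q; apply: frac01.
    by rewrite /giant_size (leq_trans (max_card _)) // card_ord.
  - move=> eps heps.
    have -> : (fun n => \sum_(q : fin_graph n * fin_graph n)
        (P n q.1 * perc_weight p q.1 q.2) *
        (`|(giant_size q.2)%:R / n%:R - z| > eps)%R%:R) =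
      (fun n => ProbPerc P p (fun (G w : fin_graph n) =>
        `|(giant_size w)%:R / n%:R - zeta p Pmu X| > eps)).
      by apply/funext => n; rewrite /ProbPerc /Eperc pair_bigA.
    exact: giant.
pose a k n := Prob1 P p (fun (G w : fin_graph n) v => (k <= #|perc_cluster w v|)%N)
   - Prob1 P p (fun (G w : fin_graph n) v => in_giant w v) + k%:R / n%:R.
have a_cvg k : a k @ \oo --> zk k - z.
  rewrite -[zk k - z]addr0; apply: cvgD; last exact: kn_cvg.
  by apply: cvgB; [exact: u_cvg|exact: G_cvg].
have s1_le k n : Prob1 P p (fun (G w : fin_graph n) v =>
    ~~ in_giant w v && (k <= #|perc_cluster w v|)%N) <= a k n.
  rewrite /a /Prob1 -(Eperc_lin _ p P P1s).
  apply: (Eperc_le _ p hp P P0) => G w.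
  have h := ineq1_nat w k.
  rewrite -!natr_sum.
  have hR : ((\sum_v ((~~ in_giant w v && (k <= #|perc_cluster w v|)%N) : nat))%:R
     + (\sum_v (in_giant w v : nat))%:R
     <= (\sum_v ((k <= #|perc_cluster w v|)%N : nat))%:R + k%:R :> R).
    by rewrite -!natrD ler_nat.
  rewrite -mulrBl -mulrDl; apply: ler_wpM2r; first by rewrite invr_ge0.
  lra.
have s1_ge0 k n : 0 <= Prob1 P p (fun (G w : fin_graph n) v =>
    ~~ in_giant w v && (k <= #|perc_cluster w v|)%N).
  apply: (Eperc_ge0 _ p hp P P0) => G w; apply: divr_ge0 => //.
  by apply: sumr_ge0.
have s2_ge0 k n : 0 <= Prob1 P p (fun (G w : fin_graph n) v =>
    (k <= #|perc_cluster w v|)%N).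
  apply: (Eperc_ge0 _ p hp P P0) => G w; apply: divr_ge0 => //.
  by apply: sumr_ge0.
have s3_ge0 k n : 0 <= Prob2 P p (fun (G w : fin_graph n) u v =>
            [&& (k <= #|perc_cluster w u|)%N, (k <= #|perc_cluster w v|)%N
              & perc_cluster w u != perc_cluster w v]).
  apply: (Eperc_ge0 _ p hp P P0) => G w; apply: divr_ge0; last exact: exprn_ge0.
  by apply: sumr_ge0 => u _; apply: sumr_ge0.
have s3_le k n : Prob2 P p (fun (G w : fin_graph n) u v =>
            [&& (k <= #|perc_cluster w u|)%N, (k <= #|perc_cluster w v|)%N
              & perc_cluster w u != perc_cluster w v]) <= 2 * a k n.
  apply: (le_trans _ (ler_wpM2l _ (s1_le k n))); last by [].
  rewrite /Prob2 /Prob1 -(Eperc_Z _ p P).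
  apply: (Eperc_le _ p hp P P0) => G w.
  have h := ineq3_nat w k.
  under eq_bigr do rewrite -natr_sum.
  rewrite -!natr_sum.
  move: G w h; case: n => [|n] G w h.
    by rewrite !big_ord0 !mul0r mulr0.
  rewrite ler_pdivrMr ?exprn_gt0 ?ltr0Sn //.
  set L := (\sum_u _)%N in h *; set S := (\sum_u _)%N in h *.
  have -> : 2 * (S%:R / n.+1%:R) * n.+1%:R ^+ 2 = (2 * n.+1 * S)%:R :> R.
    by rewrite !natrM; field; rewrite addrC natr1 pnatr_eq0.
  by rewrite ler_nat.
have dz : (fun k => zk k - z) @ \oo --> 0.
  by rewrite -(subrr z); apply: cvgB => //; exact: cvg_cst.
split.
- move=> _.
  apply: (@squeeze_cvgr _ _ _ _ (fun=> 0) (fun k => zk k - z)); last exact: dz.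
    apply: nearW => k.
    exact: (limsup_bound (s1_ge0 k) (s1_le k) (a_cvg k)).
  exact: cvg_cst.
- move=> hz.
  apply: (@squeeze_cvgr _ _ _ _ (fun=> 0) zk); last by rewrite -hz.
    apply: nearW => k.
    exact: (limsup_bound (s2_ge0 k) (fun n => lexx _) (u_cvg k)).
  exact: cvg_cst.
- apply: (@squeeze_cvgr _ _ _ _ (fun=> 0) (fun k => 2 * (zk k - z))).
  + apply: nearW => k.
    apply: (limsup_bound (s3_ge0 k) (s3_le k)).
    by apply: cvgMl_tmp; exact: a_cvg.
  + exact: cvg_cst.
  + by rewrite -(mulr0 2); apply: cvgMl_tmp; exact: dz.
Qed.
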